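(* If \(A\subseteq\operatorname{Homeo}_+(I)\) is a geometrically fast set of positive bump functions, then there is a geometrically fast set \(B\subseteq\operatorname{Homeo}_+(I)\) of positive bumps with \(A\subseteq B\) such that \(B\) has no isolated elements. Moreover, if \(A\) is finite, then \(B\) can be taken to be finite.
   Context: \(I=[0,1]\), homeomorphisms act on the right. Support \(\operatorname{supt}(f)=\{t: tf\neq t\}\). A left (right) transition point of \(f\) is \(t\notin\operatorname{supt}(f)\) such that \((t,t+\epsilon)\) (resp. \((t-\epsilon,t)\)) meets \(\operatorname{supt}(f)\) for every \(\epsilon>0\); a transition point of a set is one of some element. A positive bump is an element of \(\operatorname{Homeo}_+(I)\) whose support is a single open interval on which \(ta>t\). A set \(A\) of bumps is geometrically proper if no point is a left transition point of two distinct elements, nor a right transition point of two distinct elements. A marking assigns to each \(a\in A\) a marker \(t\in\operatorname{supt}(a)\); for \(a\) with support \((x,y)\) its feet are \(\operatorname{src}(a)=(x,t)\) and \(\operatorname{dest}(a)=[ta,y)\). \(A\) is geometrically fast if it is geometrically proper and has a marking for which all feet of all elements are pairwise disjoint. An element of \(A\) is isolated (in \(A\)) if its support contains no transition point of \(A\). *)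

(* Defs.v *)
From Stdlib Require Import Reals List.
Open Scope R_scope.

Definition inI (t : R) : Prop := 0 <= t <= 1.

(* Elements of Homeo_+(I), encoded as maps R -> R which are the identity
   outside [0,1] (so distinct homeomorphisms of I correspond to distinct
   functions), fix 0 and 1, are strictly increasing and continuous.
   (A continuous strictly increasing self-map of [0,1] fixing 0 and 1 is an
   orientation-preserving homeomorphism, and conversely.)  The action is on
   the right: t.f is written [f t]. *)
Definition homeo_plus (f : R -> R) : Prop :=
  (forall t, ~ inI t -> f t = t) /\
  f 0 = 0 /\ f 1 = 1 /\
  (forall s t, inI s -> inI t -> s < t -> f s < f t) /\
  continuity f.

Definition supt (f : R -> R) (t : R) : Prop := f t <> t.

Definition left_tp (f : R -> R) (t : R) : Prop :=
  ~ supt f t /\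
  forall eps, 0 < eps -> exists s, t < s < t + eps /\ supt f s.

Definition right_tp (f : R -> R) (t : R) : Prop :=
  ~ supt f t /\
  forall eps, 0 < eps -> exists s, t - eps < s < t /\ supt f s.

Definition transition_point (A : (R -> R) -> Prop) (t : R) : Prop :=
  exists f, A f /\ (left_tp f t \/ right_tp f t).

Definition positive_bump (f : R -> R) : Prop :=
  homeo_plus f /\
  exists x y, x < y /\ (forall t, supt f t <-> x < t < y) /\
              (forall t, x < t < y -> f t > t).

Definition geom_proper (A : (R -> R) -> Prop) : Prop :=
  (forall f g t, A f -> A g -> left_tp f t -> left_tp g t -> f = g) /\
  (forall f g t, A f -> A g -> right_tp f t -> right_tp g t -> f = g).

Definition src (a : R -> R) (m : R) (s : R) : Prop :=
  exists x y, (forall t, supt a t <-> x < t < y) /\ x < s < m.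

Definition dest (a : R -> R) (m : R) (s : R) : Prop :=
  exists x y, (forall t, supt a t <-> x < t < y) /\ a m <= s < y.

Definition foot (a : R -> R) (m : R) (k : bool) : R -> Prop :=
  if k then src a m else dest a m.

Definition geom_fast (A : (R -> R) -> Prop) : Prop :=
  geom_proper A /\
  exists mk : (R -> R) -> R,
    (forall a, A a -> supt a (mk a)) /\
    (forall a b (k k' : bool) s, A a -> A b -> (a, k) <> (b, k') ->
        foot a (mk a) k s -> foot b (mk b) k' s -> False).

Definition isolated (A : (R -> R) -> Prop) (a : R -> R) : Prop :=
  A a /\ forall t, supt a t -> ~ transition_point A t.

Definition finite_set (A : (R -> R) -> Prop) : Prop :=
  exists l : list (R -> R), forall f, A f -> In f l.

(* Main.v *)
Require Import Defs.
From Stdlib Require Import Reals Lra List Classical ClassicalEpsilon.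
Open Scope R_scope.

Definition mx (a b : R) := /2 * (a + b + Rabs (a - b)).
Definition mn (a b : R) := /2 * (a + b - Rabs (a - b)).
Definition S (p d : R) (t : R) : R :=
  mx t (mn (p + 4 * (t - p)) (p + 4 * d + (t - p - d) / 4)).

Ltac rabs_cases := unfold S, mx, mn; repeat match goal with
  |- context [Rabs ?x] => destruct (Rcase_abs x);
     [rewrite (Rabs_left x) by lra | rewrite (Rabs_right x) by lra] end.

Lemma S_out p d t : 0 < d -> t <= p \/ p + 5 * d <= t -> S p d t = t.
Proof. intros Hd H. rabs_cases; lra. Qed.
Lemma S_in p d t : 0 < d -> p < t < p + 5 * d -> S p d t > t.
Proof. intros Hd H. rabs_cases; lra. Qed.
Lemma S_mark p d : 0 < d -> S p d (p + d) = p + 4 * d.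
Proof. intros Hd. rabs_cases; lra. Qed.
Lemma S_mono p d s t : 0 < d -> s < t -> S p d s < S p d t.
Proof. intros Hd H. rabs_cases; lra.
Qed.
Lemma S_cont p d : continuity (S p d).
Proof. unfold S, mx, mn. reg. Qed.

Lemma S_supt p d t : 0 < d -> (supt (S p d) t <-> p < t < p + 5 * d).
Proof.
  intros Hd; unfold supt; split.
  - intros H. destruct (Rle_dec t p). { exfalso; apply H, S_out; lra. }
    destruct (Rle_dec (p + 5*d) t). { exfalso; apply H, S_out; lra. } lra.
  - intros H. pose proof (S_in p d t Hd H). lra.
Qed.

Lemma S_bump p d : 0 < d -> 0 < p -> p + 5 * d < 1 -> positive_bump (S p d).
Proof.
  intros Hd Hp Hq. split.
  - split; [|split; [|split; [|split]]].
    + intros t Ht. unfold inI in Ht. apply S_out; lra.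
    + apply S_out; lra.
    + apply S_out; lra.
    + intros; apply S_mono; auto.
    + apply S_cont.
  - exists p, (p + 5 * d). split; [lra|split].
    + intros; apply S_supt; auto.
    + intros; apply S_in; auto.
Qed.

Definition charI (f : R -> R) x y := forall t, supt f t <-> x < t < y.

Lemma int_uniq x y x' y' : x < y -> x' < y' ->
  (forall t, x < t < y <-> x' < t < y') -> x = x' /\ y = y'.
Proof.
  intros H1 H2 H.
  assert (x = x').
  { destruct (Rtotal_order x x') as [h|[h|h]]; auto; exfalso.
    - destruct (Rle_dec x' y).
      + destruct (H ((x+x')/2)) as [a _]. specialize (a ltac:(lra)); lra.
      + destruct (H ((x+y)/2)) as [a _]. specialize (a ltac:(lra)); lra.
    - destruct (Rle_dec x y').
      + destruct (H ((x+x')/2)) as [_ a]. specialize (a ltac:(lra)); lra.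
      + destruct (H ((x'+y')/2)) as [_ a]. specialize (a ltac:(lra)); lra. }
  subst x'. split; auto.
  destruct (Rtotal_order y y') as [h|[h|h]]; auto; exfalso.
  - destruct (H ((y+y')/2)) as [_ a]. specialize (a ltac:(lra)); lra.
  - destruct (H ((y+y')/2)) as [a _]. specialize (a ltac:(lra)); lra.
Qed.

Lemma charI_uniq f x y x' y' : x < y -> x' < y' -> charI f x y -> charI f x' y' ->
  x = x' /\ y = y'.
Proof.
  intros a b H H'. apply int_uniq; auto. intros t. rewrite <- (H t), <- (H' t). tauto.
Qed.

Lemma charI_lt f x y x' y' : x' < y' -> charI f x y -> charI f x' y' -> x < y.
Proof.
  intros a H H'. destruct (H ((x'+y')/2)) as [h _]. assert (x < (x'+y')/2 < y) by (apply h, H'; lra). lra.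
Qed.

Lemma left_tp_eq f x y t : charI f x y -> left_tp f t -> t = x.
Proof.
  intros H [Hn He]. assert (~ (x < t < y)) by (rewrite <- (H t); auto).
  destruct (Rtotal_order t x) as [h|[h|h]]; auto; exfalso.
  - destruct (He (x - t) ltac:(lra)) as [s [Hs1 Hs2]]. apply H in Hs2. lra.
  - destruct (He 1 ltac:(lra)) as [s [Hs1 Hs2]]. apply H in Hs2. lra.
Qed.

Lemma right_tp_eq f x y t : charI f x y -> right_tp f t -> t = y.
Proof.
  intros H [Hn He]. assert (~ (x < t < y)) by (rewrite <- (H t); auto).
  destruct (Rtotal_order t y) as [h|[h|h]]; auto; exfalso.
  - destruct (He 1 ltac:(lra)) as [s [Hs1 Hs2]]. apply H in Hs2. lra.
  - destruct (He (t - y) ltac:(lra)) as [s [Hs1 Hs2]]. apply H in Hs2. lra.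
Qed.

Lemma left_tp_x f x y : x < y -> charI f x y -> left_tp f x.
Proof.
  intros Hxy H. split.
  - rewrite (H _); lra.
  - intros eps He. destruct (Rle_dec eps (y - x)).
    + exists (x + eps/2). split; [lra|]. apply H; lra.
    + exists ((x + y)/2). split; [lra|]. apply H; lra.
Qed.

Lemma right_tp_y f x y : x < y -> charI f x y -> right_tp f y.
Proof.
  intros Hxy H. split.
  - rewrite (H _); lra.
  - intros eps He. destruct (Rle_dec eps (y - x)).
    + exists (y - eps/2). split; [lra|]. apply H; lra.
    + exists ((x + y)/2). split; [lra|]. apply H; lra.
Qed.

Lemma src_bounds f x y m s : x < y -> charI f x y -> src f m s -> x < s < m.
Proof.
  intros h H [x' [y' [H' Hs]]].
  assert (x' < y') by (eapply charI_lt; eauto).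
  destruct (charI_uniq f x' y' x y) as [-> ->]; auto.
Qed.

Lemma dest_bounds f x y m s : x < y -> charI f x y -> dest f m s -> f m <= s < y.
Proof.
  intros h H [x' [y' [H' Hs]]].
  assert (x' < y') by (eapply charI_lt; eauto).
  destruct (charI_uniq f x' y' x y) as [-> ->]; auto.
Qed.

Lemma not_supt f t : ~ supt f t -> f t = t.
Proof. unfold supt; intros; apply NNPP; auto. Qed.

Lemma bump_facts a x y : positive_bump a -> charI a x y -> x < y ->
  0 <= x /\ y <= 1 /\ (forall u, x < u < y -> u < a u < y).
Proof.
  intros [[Hout [H0 [H1 [Hm _]]]] [x' [y' [Hxy [Hc Hpos]]]]] H Hlt.
  destruct (charI_uniq a x' y' x y) as [-> ->]; auto.
  assert (0 <= x).
  { destruct (Rle_dec 0 x); auto. exfalso.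
    set (t := if Rle_dec 0 y then x/2 else (x+y)/2).
    assert (x < t < y /\ t < 0) by (unfold t; destruct (Rle_dec 0 y); lra).
    apply (proj2 (H t)); [lra|]. apply Hout. unfold inI; lra. }
  assert (y <= 1).
  { destruct (Rle_dec y 1); auto. exfalso.
    set (t := if Rle_dec x 1 then (1+y)/2 else (x+y)/2).
    assert (x < t < y /\ 1 < t) by (unfold t; destruct (Rle_dec x 1); lra).
    apply (proj2 (H t)); [lra|]. apply Hout. unfold inI; lra. }
  split; [auto|split;[auto|]].
  intros u Hu. split. { specialize (Hpos u Hu). lra. }
  assert (Hy : a y = y) by (apply not_supt; rewrite (H y); lra).
  rewrite <- Hy. apply Hm; unfold inI; lra.
Qed.

Lemma getI a : positive_bump a -> exists x y, x < y /\ charI a x y.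
Proof. intros [_ [x [y [h [H _]]]]]. exists x, y. split; auto. Qed.

Section Main.
Variable A : (R -> R) -> Prop.
Hypothesis HA : forall a, A a -> positive_bump a.
Hypothesis Hpl : forall f g t, A f -> A g -> left_tp f t -> left_tp g t -> f = g.
Hypothesis Hpr : forall f g t, A f -> A g -> right_tp f t -> right_tp g t -> f = g.
Variable mk : (R -> R) -> R.
Hypothesis Hmk : forall a, A a -> supt a (mk a).
Hypothesis Hfeet : forall a b (k k' : bool) s, A a -> A b -> (a, k) <> (b, k') ->
        foot a (mk a) k s -> foot b (mk b) k' s -> False.

Definition dd a := (a (mk a) - mk a) / 10.
Definition nw a0 j := S (mk a0 + j * dd a0) (dd a0).

Lemma iso_gap a0 : isolated A a0 -> exists x0 y0, x0 < y0 /\ charI a0 x0 y0 /\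
  0 <= x0 /\ y0 <= 1 /\ x0 < mk a0 < a0 (mk a0) /\ a0 (mk a0) < y0.
Proof.
  intros [HA0 _]. destruct (getI a0 (HA a0 HA0)) as [x [y [h H]]].
  destruct (bump_facts a0 x y (HA a0 HA0) H h) as [h1 [h2 h3]].
  pose proof (Hmk a0 HA0) as Hm. apply H in Hm.
  specialize (h3 _ Hm). exists x, y. split; [lra|split; [exact H|]]. repeat split; lra.
Qed.

Lemma iso_unique a0 a1 x0 y0 x1 y1 t : isolated A a0 -> isolated A a1 ->
  charI a0 x0 y0 -> charI a1 x1 y1 -> x0 < t < y0 -> x1 < t < y1 -> a0 = a1.
Proof.
  intros [HA0 I0] [HA1 I1] C0 C1 T0 T1.
  assert (x1 <= x0).
  { destruct (Rle_dec x1 x0); auto. exfalso. apply (I0 x1).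
    - apply C0. lra.
    - exists a1. split; auto. left. apply (left_tp_x a1 x1 y1); auto; lra. }
  assert (x0 <= x1).
  { destruct (Rle_dec x0 x1); auto. exfalso. apply (I1 x0).
    - apply C1. lra.
    - exists a0. split; auto. left. apply (left_tp_x a0 x0 y0); auto; lra. }
  apply (Hpl a0 a1 x0); auto.
  - apply (left_tp_x a0 x0 y0); auto; lra.
  - replace x0 with x1 by lra. apply (left_tp_x a1 x1 y1); auto; lra.
Qed.

Lemma A_gap a a0 k s : A a -> isolated A a0 -> foot a (mk a) k s ->
  mk a0 < s < a0 (mk a0) -> False.
Proof.
  intros Ha Hi Hf Hs.
  destruct (iso_gap a0 Hi) as [x0 [y0 [h0 [C0 [_ [_ [G1 G2]]]]]]].
  destruct (getI a (HA a Ha)) as [xa [ya [ha Ca]]].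
  destruct (classic (a = a0)) as [E|E].
  - subst a0. destruct k; simpl in Hf.
    + apply (src_bounds _ _ _ _ _ h0 C0) in Hf. lra.
    + apply (dest_bounds _ _ _ _ _ h0 C0) in Hf. lra.
  - destruct Hi as [HA0 I0].
    assert (xa < s < ya).
    { destruct k; simpl in Hf.
      + apply (src_bounds _ _ _ _ _ ha Ca) in Hf. pose proof (Hmk a Ha) as Hm.
        apply Ca in Hm. lra.
      + apply (dest_bounds _ _ _ _ _ ha Ca) in Hf.
        destruct (bump_facts a xa ya (HA a Ha) Ca ha) as [_ [_ h3]].
        pose proof (Hmk a Ha) as Hm. apply Ca in Hm. specialize (h3 _ Hm). lra. }
    assert (xa <= x0).
    { destruct (Rle_dec xa x0); auto. exfalso. apply (I0 xa).
      - apply C0. lra.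
      - exists a. split; auto. left. apply (left_tp_x a xa ya); auto. }
    assert (y0 <= ya).
    { destruct (Rle_dec y0 ya); auto. exfalso. apply (I0 ya).
      - apply C0. lra.
      - exists a. split; auto. right. apply (right_tp_y a xa ya); auto. }
    destruct k; simpl in Hf.
    + apply (src_bounds _ _ _ _ _ ha Ca) in Hf.
      apply (Hfeet a a0 true true ((x0 + mk a0)/2)); auto.
      * intros Hq; inversion Hq; auto.
      * simpl. exists xa, ya. split; auto. lra.
      * simpl. exists x0, y0. split; auto. lra.
    + apply (dest_bounds _ _ _ _ _ ha Ca) in Hf.
      apply (Hfeet a a0 false false ((a0 (mk a0) + y0)/2)); auto.
      * intros Hq; inversion Hq; auto.
      * simpl. exists xa, ya. split; auto. lra.
      * simpl. exists x0, y0. split; auto. lra.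
Qed.

Lemma nw_facts a0 j : isolated A a0 -> (j = 1 \/ j = 3) ->
  0 < dd a0 /\ a0 (mk a0) = mk a0 + 10 * dd a0 /\ 
  positive_bump (nw a0 j) /\
  charI (nw a0 j) (mk a0 + j * dd a0) (mk a0 + (j + 5) * dd a0) /\
  nw a0 j (mk a0 + (j + 1) * dd a0) = mk a0 + (j + 4) * dd a0.
Proof.
  intros Hi Hj.
  destruct (iso_gap a0 Hi) as [x0 [y0 [h0 [C0 [B0 [B1 [G1 G2]]]]]]].
  assert (Hd : 0 < dd a0) by (unfold dd; lra).
  assert (Hv : a0 (mk a0) = mk a0 + 10 * dd a0) by (unfold dd; field).
  split; auto. split; auto. unfold nw. split; [|split].
  - apply S_bump; auto; destruct Hj; subst j; lra.
  - intros t. rewrite S_supt by auto. split; intros; lra.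
  - replace (mk a0 + (j + 1) * dd a0) with (mk a0 + j * dd a0 + dd a0) by ring.
    rewrite S_mark by auto. ring.
Qed.

Definition mk' f := if excluded_middle_informative (A f) then mk f else
  epsilon (inhabits 0) (fun m => exists p d, 0 < d /\ f = S p d /\ m = p + d).

Lemma S_inj p d p' d' : 0 < d -> 0 < d' -> S p d = S p' d' -> p = p' /\ d = d'.
Proof.
  intros h h' E.
  destruct (charI_uniq (S p d) p (p + 5 * d) p' (p' + 5 * d')) as [E1 E2].
  - lra.
  - lra.
  - intros t; apply S_supt; auto.
  - rewrite E. intros t; apply S_supt; auto.
  - split; lra.
Qed.

Lemma mk'_A f : A f -> mk' f = mk f.
Proof. intros H. unfold mk'. destruct (excluded_middle_informative (A f)); tauto. Qed.

Lemma mk'_new f a0 j : ~ A f -> isolated A a0 -> (j = 1 \/ j = 3) -> f = nw a0 j ->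
  mk' f = mk a0 + (j + 1) * dd a0.
Proof.
  intros Hn Hi Hj E. unfold mk'. destruct (excluded_middle_informative (A f)); [tauto|].
  destruct (nw_facts a0 j Hi Hj) as [Hd _].
  match goal with |- epsilon ?i ?P = _ => 
    assert (HP : P (epsilon i P)) by (apply epsilon_spec; exists (mk a0 + j * dd a0 + dd a0), (mk a0 + j * dd a0), (dd a0); auto) end.
  destruct HP as [p [d [h [E' ->]]]].
  rewrite E in E'. unfold nw in E'. apply S_inj in E'; auto. destruct E' as [E1 E2]. rewrite <- E1, <- E2. ring.
Qed.

Definition newf f := exists a0 j, isolated A a0 /\ (j = 1 \/ j = 3) /\ f = nw a0 j.
Definition B f := A f \/ newf f.

Lemma new_feet f a0 j k s : ~ A f -> isolated A a0 -> (j = 1 \/ j = 3) -> f = nw a0 j ->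
  foot f (mk' f) k s ->
  if k then mk a0 + j * dd a0 < s < mk a0 + (j+1) * dd a0
  else mk a0 + (j+4) * dd a0 <= s < mk a0 + (j+5) * dd a0.
Proof.
  intros Hn Hi Hj E Hf. rewrite (mk'_new f a0 j) in Hf by auto.
  destruct (nw_facts a0 j Hi Hj) as [Hd [Hv [Hb [Hc Hm]]]]. subst f.
  assert (Hlt : mk a0 + j * dd a0 < mk a0 + (j + 5) * dd a0) by lra.
  destruct Hj as [-> | ->]; destruct k; simpl in Hf.
  all: try (apply (src_bounds _ _ _ _ _ Hlt Hc) in Hf; lra).
  all: apply (dest_bounds _ _ _ _ _ Hlt Hc) in Hf; rewrite Hm in Hf; lra.
Qed.


Lemma B_bump f : B f -> positive_bump f.
Proof.
  intros [H | [a0 [j [Hi [Hj E]]]]]; auto. subst f. apply (nw_facts a0 j Hi Hj).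
Qed.

Lemma new_in a0 j t : isolated A a0 -> (j = 1 \/ j = 3) ->
  mk a0 + j * dd a0 <= t <= mk a0 + (j + 5) * dd a0 ->
  exists x0 y0, charI a0 x0 y0 /\ x0 < t < y0.
Proof.
  intros Hi Hj Ht.
  destruct (iso_gap a0 Hi) as [x0 [y0 [h0 [C0 [B0 [B1 [G1 G2]]]]]]].
  destruct (nw_facts a0 j Hi Hj) as [Hd [Hv _]].
  exists x0, y0. split; auto. destruct Hj; subst j; lra.
Qed.

Lemma proper_gen (P : (R -> R) -> R -> Prop) (side : R -> Prop) :
  (forall f g t, A f -> A g -> P f t -> P g t -> f = g) ->
  (forall f t, A f -> P f t -> transition_point A t) ->
  (forall a0 j t, isolated A a0 -> (j = 1 \/ j = 3) -> P (nw a0 j) t ->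
     t = mk a0 + j * dd a0 \/ t = mk a0 + (j + 5) * dd a0) ->
  (forall a0 j t, isolated A a0 -> (j = 1 \/ j = 3) -> P (nw a0 j) t -> side j ->
     forall j', (j' = 1 \/ j' = 3) -> P (nw a0 j') t -> j = j') ->
  True.
Proof. auto. Qed.

Lemma tp_new a0 j t : isolated A a0 -> (j = 1 \/ j = 3) ->
  (left_tp (nw a0 j) t -> t = mk a0 + j * dd a0) /\
  (right_tp (nw a0 j) t -> t = mk a0 + (j + 5) * dd a0).
Proof.
  intros Hi Hj. destruct (nw_facts a0 j Hi Hj) as [Hd [Hv [Hb [Hc Hm]]]].
  split; intros H.
  - eapply left_tp_eq; eauto.
  - eapply right_tp_eq; eauto.
Qed.

Lemma B_proper : geom_proper B.
Proof.
  split.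
  - intros f g t [Af | [a0 [j [Hi [Hj E]]]]] [Ag | [a1 [j' [Hi' [Hj' E']]]]] Hf Hg.
    + eauto.
    + exfalso. subst g. apply (proj1 (tp_new a1 j' t Hi' Hj')) in Hg.
      destruct (new_in a1 j' t Hi' Hj') as [x1 [y1 [C1 T1]]]. 
      { destruct (nw_facts a1 j' Hi' Hj') as [Hd _]. destruct Hj'; subst; lra. }
      apply ((proj2 Hi') t). apply C1; auto. exists f; auto.
    + exfalso. subst f. apply (proj1 (tp_new a0 j t Hi Hj)) in Hf.
      destruct (new_in a0 j t Hi Hj) as [x1 [y1 [C1 T1]]]. 
      { destruct (nw_facts a0 j Hi Hj) as [Hd _]. destruct Hj; subst; lra. }
      apply ((proj2 Hi) t). apply C1; auto. exists g; auto.
    + subst f g. pose proof (proj1 (tp_new a0 j t Hi Hj) Hf) as T0.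
      pose proof (proj1 (tp_new a1 j' t Hi' Hj') Hg) as T1.
      destruct (new_in a0 j t Hi Hj) as [x0 [y0 [C0 U0]]]. 
      { destruct (nw_facts a0 j Hi Hj) as [Hd _]. destruct Hj; subst; lra. }
      destruct (new_in a1 j' t Hi' Hj') as [x1 [y1 [C1 U1]]]. 
      { destruct (nw_facts a1 j' Hi' Hj') as [Hd _]. destruct Hj'; subst; lra. }
      assert (a0 = a1) by (eapply iso_unique; eauto). subst a1.
      destruct (nw_facts a0 j Hi Hj) as [Hd _].
      assert (j = j').
      { destruct Hj, Hj'; subst; auto; lra. }
      subst; auto.
  - intros f g t [Af | [a0 [j [Hi [Hj E]]]]] [Ag | [a1 [j' [Hi' [Hj' E']]]]] Hf Hg.
    + eauto.
    + exfalso. subst g. apply (proj2 (tp_new a1 j' t Hi' Hj')) in Hg.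
      destruct (new_in a1 j' t Hi' Hj') as [x1 [y1 [C1 T1]]]. 
      { destruct (nw_facts a1 j' Hi' Hj') as [Hd _]. destruct Hj'; subst; lra. }
      apply ((proj2 Hi') t). apply C1; auto. exists f; auto.
    + exfalso. subst f. apply (proj2 (tp_new a0 j t Hi Hj)) in Hf.
      destruct (new_in a0 j t Hi Hj) as [x1 [y1 [C1 T1]]]. 
      { destruct (nw_facts a0 j Hi Hj) as [Hd _]. destruct Hj; subst; lra. }
      apply ((proj2 Hi) t). apply C1; auto. exists g; auto.
    + subst f g. pose proof (proj2 (tp_new a0 j t Hi Hj) Hf) as T0.
      pose proof (proj2 (tp_new a1 j' t Hi' Hj') Hg) as T1.
      destruct (new_in a0 j t Hi Hj) as [x0 [y0 [C0 U0]]]. 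
      { destruct (nw_facts a0 j Hi Hj) as [Hd _]. destruct Hj; subst; lra. }
      destruct (new_in a1 j' t Hi' Hj') as [x1 [y1 [C1 U1]]]. 
      { destruct (nw_facts a1 j' Hi' Hj') as [Hd _]. destruct Hj'; subst; lra. }
      assert (a0 = a1) by (eapply iso_unique; eauto). subst a1.
      destruct (nw_facts a0 j Hi Hj) as [Hd _].
      assert (j = j').
      { destruct Hj, Hj'; subst; auto; lra. }
      subst; auto.
Qed.


Lemma new_feet_in f a0 j k s : ~ A f -> isolated A a0 -> (j = 1 \/ j = 3) -> f = nw a0 j ->
  foot f (mk' f) k s ->
  (exists x0 y0, charI a0 x0 y0 /\ x0 < s < y0) /\ mk a0 < s < a0 (mk a0).
Proof.
  intros Hn Hi Hj E Hf. pose proof (new_feet f a0 j k s Hn Hi Hj E Hf) as H.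
  destruct (nw_facts a0 j Hi Hj) as [Hd [Hv _]].
  assert (mk a0 + j * dd a0 <= s <= mk a0 + (j + 5) * dd a0)
    by (destruct k; lra).
  split. { apply (new_in a0 j s Hi Hj); auto. }
  destruct Hj; subst j; lra.
Qed.

Lemma B_feet : forall a b (k k' : bool) s, B a -> B b -> (a, k) <> (b, k') ->
        foot a (mk' a) k s -> foot b (mk' b) k' s -> False.
Proof.
  intros a b k k' s Ba Bb Hne Fa Fb.
  destruct (classic (A a)) as [Aa | Na]; destruct (classic (A b)) as [Ab | Nb].
  - rewrite mk'_A in Fa, Fb by auto. eauto.
  - destruct Bb as [? | [a1 [j' [Hi' [Hj' E']]]]]; [tauto|].
    rewrite mk'_A in Fa by auto.
    destruct (new_feet_in b a1 j' k' s Nb Hi' Hj' E' Fb) as [_ G].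
    eapply A_gap; eauto.
  - destruct Ba as [? | [a0 [j [Hi [Hj E]]]]]; [tauto|].
    rewrite mk'_A in Fb by auto.
    destruct (new_feet_in a a0 j k s Na Hi Hj E Fa) as [_ G].
    eapply A_gap; eauto.
  - destruct Ba as [? | [a0 [j [Hi [Hj E]]]]]; [tauto|].
    destruct Bb as [? | [a1 [j' [Hi' [Hj' E']]]]]; [tauto|].
    destruct (new_feet_in a a0 j k s Na Hi Hj E Fa) as [[x0 [y0 [C0 U0]]] _].
    destruct (new_feet_in b a1 j' k' s Nb Hi' Hj' E' Fb) as [[x1 [y1 [C1 U1]]] _].
    assert (a0 = a1) by (eapply iso_unique; eauto). subst a1.
    pose proof (new_feet a a0 j k s Na Hi Hj E Fa) as G.
    pose proof (new_feet b a0 j' k' s Nb Hi' Hj' E' Fb) as G'.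
    destruct (nw_facts a0 j Hi Hj) as [Hd _].
    destruct Hj, Hj'; subst j j'; destruct k, k'; try lra; apply Hne; subst; reflexivity.
Qed.

Lemma B_mark : forall a, B a -> supt a (mk' a).
Proof.
  intros a Ba. destruct (classic (A a)) as [Aa | Na].
  - rewrite mk'_A by auto. auto.
  - destruct Ba as [? | [a0 [j [Hi [Hj E]]]]]; [tauto|].
    rewrite (mk'_new a a0 j) by auto.
    destruct (nw_facts a0 j Hi Hj) as [Hd [Hv [Hb [Hc Hm]]]].
    subst a. apply Hc. destruct Hj; subst; lra.
Qed.

Lemma B_fast : geom_fast B.
Proof.
  split. apply B_proper. exists mk'. split. apply B_mark. apply B_feet.
Qed.

Lemma B_noniso : forall b, B b -> ~ isolated B b.
Proof.
  intros b Bb [_ Hb].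
  destruct Bb as [Ab | [a0 [j [Hi [Hj E]]]]].
  - destruct (classic (isolated A b)) as [Ib | Nb].
    + destruct (iso_gap b Ib) as [x0 [y0 [h0 [C0 [B0 [B1 [G1 G2]]]]]]].
      destruct (nw_facts b 1 Ib (or_introl eq_refl)) as [Hd [Hv [Hb' [Hc Hm]]]].
      apply (Hb (mk b + 1 * dd b)).
      * apply C0. lra.
      * exists (nw b 1). split.
        -- right. exists b, 1. auto.
        -- left. eapply left_tp_x; eauto. lra.
    + apply Nb. split; auto. intros t St [g [Ag Tg]]. apply (Hb t St).
      exists g. split; auto. left; auto.
  - subst b. destruct (nw_facts a0 j Hi Hj) as [Hd [Hv [Hb' [Hc Hm]]]].
    destruct Hj; subst j.
    + destruct (nw_facts a0 3 Hi (or_intror eq_refl)) as [_ [_ [_ [Hc3 _]]]].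
      apply (Hb (mk a0 + 3 * dd a0)).
      * apply Hc. lra.
      * exists (nw a0 3). split.
        -- right. exists a0, 3. auto.
        -- left. eapply left_tp_x; eauto. lra.
    + destruct (nw_facts a0 1 Hi (or_introl eq_refl)) as [_ [_ [_ [Hc1 _]]]].
      apply (Hb (mk a0 + (1 + 5) * dd a0)).
      * apply Hc. lra.
      * exists (nw a0 1). split.
        -- right. exists a0, 1. auto.
        -- right. eapply right_tp_y; eauto. lra.
Qed.

End Main.

Theorem proposition3p1 :
  forall A : (R -> R) -> Prop,
    (forall a, A a -> positive_bump a) ->
    geom_fast A ->
    (exists B : (R -> R) -> Prop,
        (forall b, B b -> positive_bump b) /\ geom_fast B /\
        (forall a, A a -> B a) /\ (forall b, B b -> ~ isolated B b)) /\
    (finite_set A ->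
     exists B : (R -> R) -> Prop,
        (forall b, B b -> positive_bump b) /\ geom_fast B /\
        (forall a, A a -> B a) /\ (forall b, B b -> ~ isolated B b) /\
        finite_set B).
Proof.
  intros A HA [[Hpl Hpr] [mk [Hmk Hfeet]]].
  split.
  - exists (B A mk). split; [|split; [|split]].
    + apply B_bump; auto.
    + apply B_fast; auto.
    + intros a Ha. left; auto.
    + apply B_noniso; auto.
  - intros [l Hl]. exists (B A mk). split; [|split; [|split; [|split]]].
    + apply B_bump; auto.
    + apply B_fast; auto.
    + intros a Ha. left; auto.
    + apply B_noniso; auto.
    + exists (l ++ flat_map (fun a => nw mk a 1 :: nw mk a 3 :: nil) l).
      intros f [Af | [a0 [j [Hi [Hj E]]]]].
      * apply in_or_app. left; auto.
      * apply in_or_app. right. apply in_flat_map. exists a0. split.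
        -- apply Hl. apply Hi.
        -- destruct Hj; subst; simpl; auto.
Qed.
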